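(* Let $n,m$ be non-negative integers, not both equal to $0$. Then \[\sum_{d=0}^{\min(n,m)}\frac{(-1)^d}{4^{\lfloor (n+m-2d)/2\rfloor}}\,\frac{n+m-2d}{n+m-d}\binom{n+m-d}{n-d,\,m-d,\,d}\binom{2\lfloor (n+m-2d)/2\rfloor}{\lfloor (n+m-2d)/2\rfloor}=\frac{1}{4^{\lfloor n/2\rfloor+\lfloor m/2\rfloor}}\binom{2\lfloor n/2\rfloor}{\lfloor n/2\rfloor}\binom{2\lfloor m/2\rfloor}{\lfloor m/2\rfloor}.\]
   Context: $\binom{s}{a,\,b,\,c}=\frac{s!}{a!\,b!\,c!}$ denotes the multinomial coefficient (with $a+b+c=s$). *)

(* Defs.v *)
From mathcomp Require Import all_boot all_order all_algebra.
Set Implicit Arguments. Unset Strict Implicit. Unset Printing Implicit Defensive.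
Import Order.TTheory GRing.Theory Num.Theory.
Local Open Scope ring_scope.

Definition multinom (a b c : nat) : rat :=
  ((a + b + c)`!)%:R / ((a`! * b`! * c`!)%N)%:R.

(* Main.v *)
Require Import Defs.
From mathcomp Require Import all_boot all_order all_algebra.
From mathcomp Require Import zify ring lra.
Import Order.TTheory GRing.Theory Num.Theory.
Local Open Scope ring_scope.

Definition fc (a : nat) : rat := (a`!)%:R.
Lemma fc_neq0 a : fc a != 0.
Proof. by rewrite /fc pnatr_eq0 -lt0n fact_gt0. Qed.
Lemma n1_neq0 (x : nat) : 1 + x%:R != 0 :> rat.
Proof. by rewrite -[1]/(1%:R) -natrD pnatr_eq0. Qed.
Lemma fact_neq0 (x : nat) : x`!%:R != 0 :> rat.
Proof. exact: fc_neq0. Qed.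
Ltac nz := repeat (apply/andP; split); rewrite ?expf_neq0 ?n1_neq0 ?fact_neq0 //;
  rewrite -?natrD pnatr_eq0.
Lemma fcS a : fc a.+1 = a.+1%:R * fc a.
Proof. by rewrite /fc factS natrM. Qed.

Definition f (d k l : nat) : rat :=
  if [&& k == 0%N, l == 0%N & d == 0%N] then 1
  else (-1) ^+ d * (k + l)%:R * fc (k + l + d).-1 / (fc d * fc k * fc l).

Lemma fA d k l : (k + d + 2)%:R * f d.+1 k.+1 l - (k + d)%:R * f d k l.+1
   = (k + l + 1)%:R * (f d.+1 k l - f d k.+1 l.+1).
Proof.
rewrite /f /= !andbF /= !addnS !addSn /= !fcS exprS.
have := fc_neq0 d; have := fc_neq0 k; have := fc_neq0 l; have := fc_neq0 (k+l+d).
move=> h1 h2 h3 h4.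
rewrite -?[(_ + _).+1]addn1 ?natrD.
field.
by nz.
Qed.

Ltac fsimp := rewrite /f /= ?andbF /= ?addnS ?addSn ?add0n ?addn0 /= ?fcS ?exprS.

Lemma fB d l : (d + 1)%:R * f d.+1 0 l = - (l%:R * f d 0 l.+1).
Proof.
fsimp.
have := fc_neq0 d; have := fc_neq0 l; have := fc_neq0 (l+d).
move=> h1 h2 h3.
rewrite -?[(_ + _).+1]addn1 ?natrD.
field.
by nz.
Qed.

Lemma fC d k : (k + d)%:R * f d k 0 = k%:R * f d k.+1 0.
Proof.
case: k => [|k].
  rewrite /f /= add0n; case: d => [|d] /=; first by rewrite mul0r.
  by rewrite addn0 !(mulr0, mul0r, mulr0n).
fsimp.
have := fc_neq0 d; have := fc_neq0 k; have := fc_neq0 (k+d).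
move=> h1 h2 h3.
rewrite -?[(_ + _).+1]addn1 ?natrD.
field.
by nz.
Qed.

Lemma fD n m : (n + 2)%:R * f 0 n.+2 m = (n + m + 2)%:R * f 0 n.+1 m.
Proof.
fsimp.
have := fc_neq0 n; have := fc_neq0 m; have := fc_neq0 (n+m).
move=> h1 h2 h3.
rewrite -?[(_ + _).+1]addn1 ?natrD.
field.
by nz.
Qed.

Lemma binr n k : (k <= n)%N -> ('C(n, k))%:R = fc n / (fc k * fc (n - k)) :> rat.
Proof.
move=> kn; rewrite /fc -(bin_fact kn) [in RHS]natrM natrM mulfK //.
by rewrite mulf_neq0 // fact_neq0.
Qed.

Definition q (a : nat) : rat := ('C(2 * a, a))%:R / 4 ^+ a.

Lemma cb a : (2 * a + 2)%:R * q a.+1 = (2 * a + 1)%:R * q a.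
Proof.
rewrite /q !binr; try lia.
have -> : (2 * a.+1 - a.+1 = a.+1)%N by lia.
have -> : (2 * a - a = a)%N by lia.
have -> : (2 * a.+1 = (2 * a).+2)%N by lia.
rewrite !fcS exprS.
have := fc_neq0 a; have := fc_neq0 (2 * a).
move=> h1 h2.
rewrite -?[(_ + _).+1]addn1 ?natrD.
field.
nz. Qed.


Definition Q (N : nat) : rat := ('C(2 * N./2, N./2))%:R / 4 ^+ N./2.

Lemma Qrec M : (M + 2)%:R * Q M.+2 - M%:R * Q M = Q M.+1.
Proof.
have [a [->|->]] : exists a, M = (2 * a)%N \/ M = (2 * a + 1)%N by exists M./2; lia.
- rewrite /Q.
  have -> : ((2 * a).+2./2 = a.+1)%N by lia.
  have -> : ((2 * a).+1./2 = a)%N by lia.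
  have -> : ((2 * a)./2 = a)%N by lia.
  rewrite -/(q a) -/(q a.+1).
  have := cb a. rewrite ?natrD. lra.
- rewrite /Q.
  have -> : ((2 * a + 1).+2./2 = a.+1)%N by lia.
  have -> : ((2 * a + 1).+1./2 = a.+1)%N by lia.
  have -> : ((2 * a + 1)./2 = a)%N by lia.
  rewrite -/(q a) -/(q a.+1).
  have := cb a. rewrite ?natrD. lra.
Qed.

Lemma natrBE (a b c : nat) : (a = b + c)%N -> a%:R - b%:R = c%:R :> rat.
Proof. by move->; rewrite natrD; ring. Qed.

Definition u (n m d : nat) : rat :=
  if (d <= n)%N && (d <= m)%N then f d (n - d) (m - d) else 0.

Lemma uE n m d : (d <= n)%N -> (d <= m)%N -> u n m d = f d (n - d) (m - d).
Proof. by rewrite /u => -> ->. Qed.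

Lemma u0 n m d : (n < d)%N \/ (m < d)%N -> u n m d = 0.
Proof.
rewrite /u => h; case: ifP => // /andP[h1 h2]; exfalso; lia.
Qed.

Lemma fd00 d : f d.+1 0 0 = 0.
Proof. by rewrite /f /= !(mulr0, mul0r, mulr0n). Qed.

Lemma uI n' m d : (n' + 2)%:R * u n'.+2 m d.+1 - n'%:R * u n' m d
  = ((n' + m)%:R - (2 * d)%:R) * (u n'.+1 m d.+1 - u n'.+1 m d).
Proof.
have [hE|hE] := boolP ((n'.+1 < d)%N || (m < d)%N).
  rewrite !u0; try lia. by rewrite !(mulr0, subr0).
have hd1 : (d <= n'.+1)%N by lia.
have hd2 : (d <= m)%N by lia.
have [e1|e1] := boolP (d == n'.+1).
  move/eqP: e1 => e1; subst d.
  have [e2|e2] := boolP (m == n'.+1).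
    move/eqP: e2 => e2; subst m.
    rewrite (u0 _ _ (n'.+2)); last lia.
    rewrite (u0 n'); last lia.
    rewrite (u0 n'.+1 _ n'.+2); last lia.
    rewrite uE // !subnn fd00; by rewrite !(mulr0, subr0).
  have [l el] : exists l, m = (l + n'.+2)%N by exists (m - n'.+2)%N; lia.
  subst m.
  rewrite (u0 n'); last lia.
  rewrite (u0 n'.+1 _ n'.+2); last lia.
  rewrite !uE; try lia.
  rewrite !subnn.
  have -> : (l + n'.+2 - n'.+2 = l)%N by lia.
  have -> : (l + n'.+2 - n'.+1 = l.+1)%N by lia.
  rewrite (@natrBE _ _ l); last lia.
  have := fB n'.+1 l. rewrite !addn1 addn2 => ->.
  by rewrite mulr0 subr0 sub0r mulrN.
have [k ek] : exists k, n' = (k + d)%N by exists (n' - d)%N; lia.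
subst n'.
have [e2|e2] := boolP (m == d).
  move/eqP: e2 => e2; subst m.
  rewrite (u0 _ _ d.+1); last lia.
  rewrite (u0 (k + d).+1 _ d.+1); last lia.
  rewrite !uE; try lia.
  rewrite !subnn.
  have -> : (k + d - d = k)%N by lia.
  have -> : ((k + d).+1 - d = k.+1)%N by lia.
  rewrite (@natrBE _ _ k); last lia.
  by rewrite fC mulr0 !sub0r mulrN.
have [l el] : exists l, m = (l + d).+1 by exists (m - d.+1)%N; lia.
subst m.
rewrite !uE; try lia.
have -> : ((k + d).+2 - d.+1 = k.+1)%N by lia.
have -> : ((l + d).+1 - d.+1 = l)%N by lia.
have -> : (k + d - d = k)%N by lia.
have -> : ((l + d).+1 - d = l.+1)%N by lia.
have -> : ((k + d).+1 - d.+1 = k)%N by lia.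
have -> : ((k + d).+1 - d = k.+1)%N by lia.
rewrite (@natrBE _ _ (k + l + 1)%N); last lia.
exact: fA.
Qed.

Definition Sg (B n m : nat) : rat := \sum_(0 <= d < B) u n m d * Q (n + m - 2 * d).

Lemma stab B n m : (minn n m < B)%N -> Sg B n m = Sg (minn n m).+1 n m.
Proof.
elim: B => [|B IH] hB; first lia.
case: (ltnP (minn n m) B) => h.
  rewrite /Sg big_nat_recr //= u0; last lia.
  by rewrite mul0r addr0; apply: IH.
by have -> : B = minn n m by lia.
Qed.

Lemma PT n' m e :
  (((n' + m + 2)%:R - (2 * e)%:R) * Q (n' + m + 2 - 2 * e)
   - ((n' + m)%:R - (2 * e)%:R) * Q (n' + m - 2 * e)) * u n'.+1 m e
  = u n'.+1 m e * Q (n'.+1 + m - 2 * e).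
Proof.
have [hE|hE] := boolP ((n'.+1 < e)%N || (m < e)%N).
  by rewrite u0 ?mulr0 ?mul0r //; lia.
have [e1|e1] := boolP ((n'.+1 + m)%N == (2 * e)%N).
  have ee : e = n'.+1 by lia.
  have em : m = n'.+1 by lia.
  subst e m.
  by rewrite uE // subnn fd00 mulr0 mul0r.
set M' := (n' + m - 2 * e)%N.
have -> : (n' + m + 2 - 2 * e = M'.+2)%N by rewrite /M'; lia.
have -> : (n'.+1 + m - 2 * e = M'.+1)%N by rewrite /M'; lia.
rewrite (@natrBE _ _ (M' + 2)%N); last (rewrite /M'; lia).
rewrite (@natrBE _ _ M'); last (rewrite /M'; lia).
by rewrite Qrec mulrC.
Qed.

Lemma rec n' m : (n' + 2)%:R * Sg n'.+3 n'.+2 m - n'%:R * Sg n'.+1 n' m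
  = Sg n'.+2 n'.+1 m.
Proof.
have eS : Sg n'.+1 n' m = Sg n'.+2 n' m.
  rewrite (@stab n'.+1 n' m); last lia.
  by rewrite (@stab n'.+2 n' m); last lia.
rewrite eS.
set T1 := \sum_(0 <= d < n'.+2) u n'.+2 m d.+1 * Q (n' + m - 2 * d).
set A := \sum_(0 <= d < n'.+2)
   ((n' + m)%:R - (2 * d)%:R) * Q (n' + m - 2 * d) * u n'.+1 m d.+1.
set Bs := \sum_(0 <= d < n'.+2)
   ((n' + m)%:R - (2 * d)%:R) * Q (n' + m - 2 * d) * u n'.+1 m d.
set Rs := \sum_(0 <= e < n'.+3)
   ((n' + m + 2)%:R - (2 * e)%:R) * Q (n' + m + 2 - 2 * e) * u n'.+1 m e.
have H : (n' + 2)%:R * T1 - n'%:R * Sg n'.+2 n' m = A - Bs.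
  rewrite /T1 /A /Bs /Sg !mulr_sumr -!sumrB.
  apply: eq_bigr => d _.
  have := uI n' m d.
  move=> h.
  have h2 : (n' + 2)%:R * (u n'.+2 m d.+1 * Q (n' + m - 2 * d))
     - n'%:R * (u n' m d * Q (n' + m - 2 * d))
     = ((n' + 2)%:R * u n'.+2 m d.+1 - n'%:R * u n' m d) * Q (n' + m - 2 * d) by ring.
  rewrite h2 h; ring.
have E1 : Sg n'.+3 n'.+2 m = u n'.+2 m 0 * Q (n' + m + 2) + T1.
  rewrite /Sg big_nat_recl //; congr (_ * Q _ + _); first lia.
  apply: eq_bigr => d _; congr (_ * Q _); lia.
have D : (n' + 2)%:R * (u n'.+2 m 0 * Q (n' + m + 2))
     = (n' + m + 2)%:R * Q (n' + m + 2) * u n'.+1 m 0.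
  rewrite !uE // !subn0 mulrA fD; ring.
have E2 : A + (n' + m + 2)%:R * Q (n' + m + 2) * u n'.+1 m 0 = Rs.
  rewrite /Rs big_nat_recl // muln0 subn0 subr0 addrC; congr (_ + _).
  apply: eq_bigr => d _.
  have -> : (n' + m + 2 - 2 * d.+1 = n' + m - 2 * d)%N by lia.
  congr (_ * _ * _).
  rewrite !natrD !natrM; ring.
have E3 : Rs - Bs = Sg n'.+2 n'.+1 m.
  rewrite /Rs big_nat_recr //= [u n'.+1 m n'.+2]u0; last lia.
  rewrite mulr0 addr0 /Bs -sumrB /Sg.
  apply: eq_bigr => e _; rewrite -PT; ring.
rewrite E1; clear E1 eS.
move: H D E2 E3.
move: (Sg n'.+2 n' m) (Sg n'.+2 n'.+1 m) T1 A Bs Rs => X Y Z U V W.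
move=> H D E2 E3.
rewrite -E3 -E2 -D. 
have -> : (n' + 2)%:R * (u n'.+2 m 0 * Q (n' + m + 2) + Z) - n'%:R * X
   = (n' + 2)%:R * (u n'.+2 m 0 * Q (n' + m + 2)) + ((n' + 2)%:R * Z - n'%:R * X) by ring.
rewrite H; ring.
Qed.

Lemma S0 m : Sg 1 0 m = Q m.
Proof.
rewrite /Sg big_nat1 uE // !subn0.
case: m => [|m]; first by rewrite /f /= mul1r.
rewrite /f /= add0n fcS /fc /= expr0 mul1r !mulr1.
rewrite addn0 (_ : 0`!%:R = 1) // mul1r -natrM mulfV ?mul1r // pnatr_eq0 -lt0n muln_gt0 fact_gt0 andbT //.
Qed.

Lemma Q0 : Q 0 = 1.
Proof. by rewrite /Q /= expr0 divr1. Qed.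
Lemma Q1 : Q 1 = 1.
Proof. by rewrite /Q /= expr0 divr1. Qed.

Lemma S1 m : Sg 2 1 m = Q m.
Proof.
rewrite /Sg big_nat_recr // big_nat1 /=.
case: m => [|m].
  rewrite (u0 1 0 1); last lia.
  rewrite uE // /f /= mulr0 addr0 Q1 Q0 /fc /=.
have U0 : u 1 m.+1 0 = (m + 2)%:R.
  rewrite uE // !subn0 /f /= ?addn0 ?add0n /= ?add1n /= ?fcS.
  rewrite /fc fact0 expr0 !mul1r mulfK; last by rewrite mulf_neq0 ?fact_neq0 // pnatr_eq0.
  by rewrite addn2.
have U1 : u 1 m.+1 1 = - m%:R.
  rewrite uE // subnn /f /= ?addn0 ?add0n ?addn1 /= ?subn1 /=.
  rewrite /fc fact0 expr1 !mul1r mulfK ?fact_neq0 //.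
  by rewrite andbF mulN1r.
rewrite U0 U1.
have -> : (1 + m.+1 - 2 * 0 = m.+2)%N by lia.
have -> : (1 + m.+1 - 2 * 1 = m)%N by lia.
rewrite -(Qrec m); ring.
Qed.

Lemma Smain n m : Sg n.+1 n m = Q n * Q m.
Proof.
suff : Sg n.+1 n m = Q n * Q m /\ Sg n.+2 n.+1 m = Q n.+1 * Q m by case.
elim: n => [|n [IH1 IH2]].
  by rewrite S0 S1 Q0 Q1 !mul1r.
split => //.
have := rec n m; rewrite IH1 IH2 => h.
have h2 := Qrec n.
have hn : (n + 2)%:R != 0 :> rat by rewrite pnatr_eq0 addn2.
apply: (mulfI hn).
have -> : (n + 2)%:R * (Q n.+2 * Q m) = ((n + 2)%:R * Q n.+2 - n%:R * Q n) * Q m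
   + n%:R * (Q n * Q m) by ring.
rewrite h2 -h; ring.
Qed.

Lemma TE n m d : (d <= n)%N -> (d <= m)%N -> (0 < n + m)%N ->
  (-1) ^+ d / (4 ^+ ((n + m - 2 * d)./2)%N : rat)
      * (((n + m - 2 * d)%N)%:R / ((n + m - d)%N)%:R)
      * multinom (n - d) (m - d) d
      * ('C(2 * (n + m - 2 * d)./2, (n + m - 2 * d)./2))%:R
  = u n m d * Q (n + m - 2 * d).
Proof.
move=> h1 h2 h3.
rewrite uE // /Q /f.
case: ifP => [/and3P[/eqP a /eqP b /eqP c]|_]; first lia.
rewrite /multinom.
have e1 : (n + m - 2 * d = (n - d) + (m - d))%N by lia.
have e2 : (n + m - d = (n - d) + (m - d) + d)%N by lia.
rewrite e1 e2.
move: (n - d)%N (m - d)%N h3 e1 e2 => k l h3 e1 e2.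
have [s es] : exists s, (k + l + d = s.+1)%N by exists (k + l + d).-1; lia.
rewrite es /= factS /fc !natrM.
set h := ((k + l)./2)%N.
field.
nz.
Qed.

Theorem corollary4p1 (n m : nat) (Hnm : (0 < n + m)%N) :
  \sum_(0 <= d < (minn n m).+1)
     ((-1) ^+ d / (4 ^+ ((n + m - 2 * d)./2)%N : rat)
      * (((n + m - 2 * d)%N)%:R / ((n + m - d)%N)%:R)
      * multinom (n - d) (m - d) d
      * ('C(2 * (n + m - 2 * d)./2, (n + m - 2 * d)./2))%:R)
  = 1 / (4 ^+ (n./2 + m./2)%N : rat)
      * ('C(2 * n./2, n./2))%:R * ('C(2 * m./2, m./2))%:R.
Proof.
have -> : \sum_(0 <= d < (minn n m).+1)
     ((-1) ^+ d / (4 ^+ ((n + m - 2 * d)./2)%N : rat)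
      * (((n + m - 2 * d)%N)%:R / ((n + m - d)%N)%:R)
      * multinom (n - d) (m - d) d
      * ('C(2 * (n + m - 2 * d)./2, (n + m - 2 * d)./2))%:R)
   = Sg (minn n m).+1 n m.
  rewrite /Sg; apply: eq_big_nat => d /andP[_ hd].
  apply: TE => //; lia.
rewrite -(@stab n.+1 n m); last lia.
rewrite Smain /Q exprD.
field.
by rewrite !expf_neq0.
Qed.
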